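(* Assume $(H_S(\infty))$, and for $\lambda\in(0,1]$ let $\mathbf a_\lambda>0$ be the unique solution of $\lambda\mathbf a_\lambda=\nu_S((\mathbf a_\lambda,\infty))$ and $\mathbf n_\lambda=\lfloor 1/(\lambda\mathbf a_\lambda)\rfloor$. Then there exists a function $\lambda\mapsto\mathbf m_\lambda$ from $(0,1]$ to $\mathbb{N}$ which is non-increasing and satisfies $\lim_{\lambda\to0}\mathbf m_\lambda=\infty$, $\lim_{\lambda\to0}\mathbf m_\lambda/\mathbf n_\lambda=0$, and for every $z\in[0,1)$, $\lim_{\lambda\to0}\mathbf m_\lambda\,\nu_S((\mathbf a_\lambda z,\infty))=\infty$.
   Context: $(H_S(\infty))$: $\mu_S$ is a probability measure on $(0,\infty)$ with unbounded support and finite mean $m_S$; with $\nu_S(dt)=m_S^{-1}\mu_S((t,\infty))dt$, for all $t>0$, $\lim_{x\to\infty}\nu_S((x,\infty))/\nu_S((tx,\infty))=t^\infty$, where $t^\infty=0$ for $t<1$, $1^\infty=1$, $t^\infty=\infty$ for $t>1$. (The map $a\mapsto a/\nu_S((a,\infty))$ is an increasing continuous bijection of $(0,\infty)$, so $\mathbf a_\lambda$ is well defined and $\mathbf a_\lambda\to\infty$ as $\lambda\to0$.) *)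

(* Defs.v *)
From Stdlib Require Export Reals.
Open Scope R_scope.

Definition improper_int_from (f : R -> R) (x L : R) : Prop :=
  (forall y, x <= y -> exists _ : Riemann_integrable f x y, True) /\
  (forall eps, 0 < eps -> exists Y, forall y (pr : Riemann_integrable f x y),
      x <= y -> Y <= y -> Rabs (RiemannInt pr - L) < eps).

(* Fbar is the survival function t |-> mu((t,oo)) of a probability measure mu
   on (0,oo): non-increasing, right-continuous, equal to 1 on (-oo,0],
   tending to 0 at +oo (distribution functions <-> probability measures). *)
Definition is_survival_fun_pos (Fbar : R -> R) : Prop :=
  (forall s t, s <= t -> Fbar t <= Fbar s) /\
  (forall t eps, 0 < eps -> exists delta, 0 < delta /\
      forall s, t < s < t + delta -> Rabs (Fbar s - Fbar t) < eps) /\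
  (forall t, t <= 0 -> Fbar t = 1) /\
  (forall eps, 0 < eps -> exists T, forall t, T <= t -> Fbar t < eps).

Definition unbounded_support (Fbar : R -> R) : Prop := forall t, 0 < Fbar t.

Definition has_mean (Fbar : R -> R) (m : R) : Prop := improper_int_from Fbar 0 m.

(* G x = nu((x,oo)) = m^{-1} \int_x^oo mu((t,oo)) dt, for x >= 0 *)
Definition is_nu_tail (Fbar : R -> R) (m : R) (G : R -> R) : Prop :=
  forall x, 0 <= x -> exists I, improper_int_from Fbar x I /\ G x = I / m.

(* lim_{x->oo} G x / G (t x) = t^oo *)
Definition H_S_infty_ratio (G : R -> R) : Prop :=
  forall t, 0 < t ->
    (t < 1 -> forall eps, 0 < eps -> exists X, forall x, X <= x ->
        Rabs (G x / G (t * x)) < eps) /\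
    (t = 1 -> forall eps, 0 < eps -> exists X, forall x, X <= x ->
        Rabs (G x / G (t * x) - 1) < eps) /\
    (1 < t -> forall M, exists X, forall x, X <= x -> M <= G x / G (t * x)).

Definition H_S_infty (Fbar : R -> R) (m : R) (G : R -> R) : Prop :=
  is_survival_fun_pos Fbar /\ unbounded_support Fbar /\ has_mean Fbar m /\
  is_nu_tail Fbar m G /\ H_S_infty_ratio G.

Definition lim0_infty (h : R -> R) : Prop :=
  forall M, exists delta, 0 < delta /\
    forall l, 0 < l <= 1 -> l < delta -> M <= h l.

Definition lim0_zero (h : R -> R) : Prop :=
  forall eps, 0 < eps -> exists delta, 0 < delta /\
    forall l, 0 < l <= 1 -> l < delta -> Rabs (h l) < eps.

Definition n_of (a : R -> R) (l : R) : R := IZR (Int_part (1 / (l * a l))).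

(* Main.v *)
Require Import Defs.
From Stdlib Require Import Reals Lra Lia ZArith Classical ClassicalEpsilon.
Open Scope R_scope.

Lemma imp_lower f x L c Y0 : improper_int_from f x L ->
  (forall y (pr:Riemann_integrable f x y), x<=y -> Y0 <= y -> c <= RiemannInt pr) -> c <= L.
Proof.
intros [Hi Hl] Hc. destruct (Rle_or_lt c L) as [h|h]; [exact h|].
destruct (Hl (c - L)) as [Y HY]; [lra|].
set (y := Rmax (Rmax Y Y0) x).
assert (h1: Y <= y) by (unfold y; eapply Rle_trans; apply Rmax_l).
assert (h2: Y0 <= y) by (unfold y; eapply Rle_trans; [apply Rmax_r|apply Rmax_l]).
assert (hx: x <= y) by (unfold y; apply Rmax_r).
destruct (Hi y hx) as [pr _].
specialize (HY y pr hx h1). specialize (Hc y pr hx h2).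
apply Rabs_def2 in HY. lra.
Qed.

Lemma int_ge_sub f x c y (pr : Riemann_integrable f x y) (pr' : Riemann_integrable f c y) :
  x <= c <= y -> (forall t, 0 <= f t) -> RiemannInt pr' <= RiemannInt pr.
Proof.
intros Hc Hf.
pose (pr1 := RiemannInt_P22 pr Hc). pose (pr2 := RiemannInt_P23 pr Hc).
rewrite <- (RiemannInt_P26 pr1 pr2 pr).
rewrite (RiemannInt_P5 pr' pr2).
assert (E := RiemannInt_P15 (RiemannInt_P14 x c 0)).
assert (H := RiemannInt_P19 (RiemannInt_P14 x c 0) pr1 (proj1 Hc)
   (fun t _ => Hf t)).
unfold fct_cte in *. lra.
Qed.

Lemma int_pos f x y (pr: Riemann_integrable f x y): x+1 <= y -> (forall t, 0 <= f t) ->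
  (forall s t, s<=t -> f t <= f s) -> f (x+1) <= RiemannInt pr.
Proof.
intros hy Hf Hm.
assert (Hc : x <= x+1 <= y) by lra.
pose (pr1 := RiemannInt_P22 pr Hc). pose (pr2 := RiemannInt_P23 pr Hc).
rewrite <- (RiemannInt_P26 pr1 pr2 pr).
assert (E := RiemannInt_P15 (RiemannInt_P14 (x+1) y 0)).
assert (H := RiemannInt_P19 (RiemannInt_P14 (x+1) y 0) pr2 (proj2 Hc)
   (fun t _ => Hf t)).
assert (E' := RiemannInt_P15 (RiemannInt_P14 x (x+1) (f (x+1)))).
assert (H' : RiemannInt (RiemannInt_P14 x (x+1) (f (x+1))) <= RiemannInt pr1).
{ apply RiemannInt_P19; [lra|]. intros t ht. unfold fct_cte. apply Hm. lra. }
unfold fct_cte in *. lra.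
Qed.

Lemma imp_pos f x L: improper_int_from f x L -> (forall t, 0 < f t) ->
  (forall s t, s<=t -> f t <= f s) -> 0 < L.
Proof.
intros HI Hp Hm. apply Rlt_le_trans with (f (x+1)); [auto|].
apply (imp_lower f x L (f (x+1)) (x+1) HI). intros y pr _ hy.
apply int_pos; auto. intro; left; auto.
Qed.

Lemma imp_mono f x x' L L': improper_int_from f x L -> improper_int_from f x' L' ->
  x <= x' -> (forall t, 0 <= f t) -> L' <= L.
Proof.
intros [Hi Hl] [Hi' Hl'] hx Hf.
destruct (Rle_or_lt L' L) as [h|h]; [exact h|].
destruct (Hl ((L'-L)/2)) as [Y1 HY1]; [lra|].
destruct (Hl' ((L'-L)/2)) as [Y2 HY2]; [lra|].
set (y := Rmax (Rmax Y1 Y2) x').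
assert (h1: Y1 <= y) by (unfold y; eapply Rle_trans; apply Rmax_l).
assert (h2: Y2 <= y) by (unfold y; eapply Rle_trans; [apply Rmax_r|apply Rmax_l]).
assert (hx': x' <= y) by (unfold y; apply Rmax_r).
assert (hxy: x <= y) by lra.
destruct (Hi y hxy) as [pr _]. destruct (Hi' y hx') as [pr' _].
specialize (HY1 y pr hxy h1). specialize (HY2 y pr' hx' h2).
assert (Hge := int_ge_sub f x x' y pr pr' (conj hx hx') Hf).
apply Rabs_def2 in HY1. apply Rabs_def2 in HY2. lra.
Qed.

Lemma G_props Fbar m G : H_S_infty Fbar m G ->
  (forall x, 0<=x -> 0 < G x) /\ (forall x y, 0<=x -> x<=y -> G y <= G x).
Proof.
intros [[Hmono _] [Hpos [Hmean [Htail _]]]].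
assert (Hnn : forall t, 0 <= Fbar t) by (intro; left; apply Hpos).
assert (Hm : 0 < m) by (exact (imp_pos Fbar 0 m Hmean Hpos Hmono)).
split.
- intros x hx. destruct (Htail x hx) as [I [HI ->]].
  apply Rdiv_lt_0_compat; [|exact Hm]. exact (imp_pos _ _ _ HI Hpos Hmono).
- intros x y hx hxy. destruct (Htail x hx) as [I [HI ->]].
  destruct (Htail y (Rle_trans _ _ _ hx hxy)) as [I' [HI' ->]].
  unfold Rdiv. apply Rmult_le_compat_r; [left; apply Rinv_0_lt_compat; exact Hm|].
  exact (imp_mono _ _ _ _ _ HI HI' hxy Hnn).
Qed.

Definition zz (k : nat) : R := 1 - / (INR k + 1).

Lemma zz_nonneg k : 0 <= zz k.
Proof. unfold zz. assert (1 <= INR k + 1) by (generalize (pos_INR k); lra).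
assert (/ (INR k + 1) <= / 1) by (apply Rinv_le_contravar; lra). rewrite Rinv_1 in H0. lra. Qed.

Lemma zz_mono i j : (i <= j)%nat -> zz i <= zz j.
Proof. intros h. unfold zz. apply le_INR in h. generalize (pos_INR i); intro.
assert (/ (INR j + 1) <= / (INR i + 1)) by (apply Rinv_le_contravar; lra). lra. Qed.

Lemma zz_pos j : 0 < zz (S j).
Proof. unfold zz. rewrite S_INR. generalize (pos_INR j); intro.
assert (/ (INR j + 1 + 1) < / 1) by (apply Rinv_lt_contravar; lra). rewrite Rinv_1 in H0. lra. Qed.

Lemma zz_lt1 k : zz k < 1.
Proof. unfold zz. generalize (pos_INR k); intro. assert (0 < / (INR k + 1)) by (apply Rinv_0_lt_compat; lra). lra. Qed.

Lemma zz_event t : t < 1 -> exists k0, forall k, (k0 <= k)%nat -> t <= zz k.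
Proof. intros ht. destruct (INR_unbounded (/ (1 - t))) as [k0 hk]. exists k0. intros k hk'.
apply le_INR in hk'. apply Rle_trans with (zz k0); [|apply zz_mono; apply INR_le; auto].
unfold zz. assert (0 < / (1-t)) by (apply Rinv_0_lt_compat; lra).
assert (/ (INR k0 + 1) < / / (1 - t)) by (apply Rinv_lt_contravar; nra).
rewrite Rinv_inv in H0. lra. Qed.

Fixpoint Dseq (d : nat -> R) (k:nat) : R :=
  match k with 0 => 2 | S j => Rmin (Dseq d j) (Rmin (d j) (/ (INR j + 2))) end.

Lemma Dseq_S d j : Dseq d (S j) <= Dseq d j /\ Dseq d (S j) <= d j /\ Dseq d (S j) <= / (INR j + 2).
Proof. simpl. split; [apply Rmin_l|]. split; eapply Rle_trans; try apply Rmin_r; try apply Rmin_l; apply Rmin_r. Qed.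

Lemma Dseq_anti d i j : (i <= j)%nat -> Dseq d j <= Dseq d i.
Proof. induction 1; [lra|]. eapply Rle_trans; [apply (proj1 (Dseq_S d m))|exact IHle]. Qed.

Lemma Dseq_pos d k : (forall j, 0 < d j) -> 0 < Dseq d k.
Proof. intros hd. induction k; simpl; [lra|].
assert (0 < / (INR k + 2)) by (apply Rinv_0_lt_compat; generalize (pos_INR k); lra).
apply Rmin_glb_lt; [auto|apply Rmin_glb_lt; auto]. Qed.

Lemma find_k (P : nat -> Prop) N : P 0%nat -> ~ P N -> exists k, P k /\ ~ P (S k).
Proof. induction N; intros h0 hN; [contradiction|].
destruct (classic (P N)) as [h|h]; [exists N; auto|auto]. Qed.

Lemma Kex d l : exists k, (0 < l <= 1 -> l < Dseq d k /\ Dseq d (S k) <= l).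
Proof.
destruct (classic (0 < l <= 1)) as [h|h]; [|exists 0%nat; intro; contradiction].
destruct (INR_unbounded (/ l)) as [n hn].
destruct (find_k (fun k => l < Dseq d k) (S n)) as [k [h1 h2]].
- simpl; lra.
- intro c. destruct (Dseq_S d n) as [_ [_ h3]].
  assert (0 < / l) by (apply Rinv_0_lt_compat; lra).
  assert (/ (INR n + 2) < / / l) by (apply Rinv_lt_contravar; nra).
  rewrite Rinv_inv in H0. lra.
- exists k. intros _. split; auto. apply Rnot_lt_le; auto.
Qed.

Definition Kfun d l : nat := proj1_sig (constructive_indefinite_description _ (Kex d l)).

Lemma Kfun_spec d l : 0 < l <= 1 -> l < Dseq d (Kfun d l) /\ Dseq d (S (Kfun d l)) <= l.
Proof. unfold Kfun. destruct (constructive_indefinite_description _ _) as [k hk]. simpl. auto. Qed.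

Lemma K_ge d l j : 0 < l <= 1 -> l < Dseq d j -> (j <= Kfun d l)%nat.
Proof. intros hl hj. destruct (Nat.le_gt_cases j (Kfun d l)) as [h|h]; auto.
exfalso. destruct (Kfun_spec d l hl) as [_ h2].
assert (Dseq d j <= Dseq d (S (Kfun d l))) by (apply Dseq_anti; lia). lra. Qed.

Lemma K_mono d l1 l2 : 0 < l1 -> l1 <= l2 -> l2 <= 1 -> (Kfun d l2 <= Kfun d l1)%nat.
Proof. intros. apply K_ge; [lra|]. destruct (Kfun_spec d l2) as [h _]; [lra|]. lra. Qed.

Lemma floor_spec x : 0 <= x -> x - 1 < INR (Z.to_nat (Int_part x)) <= x.
Proof. intros hx. destruct (base_Int_part x) as [h1 h2].
assert (hz : (0 <= Int_part x)%Z).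
{ assert (-1 < Int_part x)%Z by (apply lt_IZR; simpl; lra). lia. }
rewrite INR_IZR_INZ, Z2Nat.id by exact hz. lra. Qed.

Lemma floor_mono x y : 0 <= x -> x <= y -> (Z.to_nat (Int_part x) <= Z.to_nat (Int_part y))%nat.
Proof. intros hx hxy. destruct (floor_spec x hx) as [_ a1]. destruct (floor_spec y) as [b1 _]; [lra|].
assert (INR (Z.to_nat (Int_part x)) < INR (S (Z.to_nat (Int_part y)))) by (rewrite S_INR; lra).
apply INR_lt in H. lia. Qed.

Lemma a_mono (G a : R -> R) :
  (forall x y, 0<=x -> x<=y -> G y <= G x) ->
  (forall l, 0 < l <= 1 -> 0 < a l /\ l * a l = G (a l)) ->
  forall l1 l2, 0<l1 -> l1<=l2 -> l2<=1 -> a l2 <= a l1.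
Proof.
intros Hmo Ha l1 l2 h1 h12 h2.
destruct (Ha l1) as [p1 e1]; [lra|]. destruct (Ha l2) as [p2 e2]; [lra|].
destruct (Rle_or_lt (a l2) (a l1)) as [h|h]; auto. exfalso.
assert (G (a l2) <= G (a l1)) by (apply Hmo; lra).
assert (l1 * a l1 < l1 * a l2) by (apply Rmult_lt_compat_l; lra).
assert (l1 * a l2 <= l2 * a l2) by (apply Rmult_le_compat_r; lra).
lra.
Qed.

Lemma a_inf (G a : R -> R) :
  (forall x, 0<=x -> 0 < G x) ->
  (forall x y, 0<=x -> x<=y -> G y <= G x) ->
  (forall l, 0 < l <= 1 -> 0 < a l /\ l * a l = G (a l)) ->
  forall B, exists d, 0<d /\ forall l, 0<l<=1 -> l<d -> B <= a l.
Proof.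
intros Hp Hmo Ha B. set (B' := Rabs B + 1).
assert (hB : 0 < B') by (unfold B'; generalize (Rabs_pos B); lra).
assert (hG := Hp B' (Rlt_le _ _ hB)).
exists (G B' / B'). split; [apply Rdiv_lt_0_compat; auto|].
intros l hl hd. destruct (Ha l hl) as [pa ea].
destruct (Rle_or_lt B' (a l)) as [h|h].
- generalize (Rle_abs B); unfold B' in h; lra.
- exfalso. assert (G B' <= G (a l)) by (apply Hmo; lra).
  assert (l * B' < G B').
  { apply (Rmult_lt_compat_r B') in hd; [|lra]. unfold Rdiv in hd.
    rewrite Rmult_assoc, Rinv_l, Rmult_1_r in hd; lra. }
  assert (l * a l < l * B') by (apply Rmult_lt_compat_l; lra).
  lra.
Qed.

Lemma r_small (G a : R -> R) :
  (forall x, 0<=x -> 0 < G x) ->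
  (forall x y, 0<=x -> x<=y -> G y <= G x) ->
  (forall l, 0 < l <= 1 -> 0 < a l /\ l * a l = G (a l)) ->
  H_S_infty_ratio G ->
  forall t, 0<t<1 -> forall eps, 0<eps -> exists d, 0<d /\
    forall l, 0<l<=1 -> l<d -> G (a l) / G (t * a l) < eps.
Proof.
intros Hp Hmo Ha Hr t [ht0 ht1] eps heps.
destruct (proj1 (Hr t ht0) ht1 eps heps) as [X HX].
destruct (a_inf G a Hp Hmo Ha X) as [d [hd Hd]]. exists d. split; auto.
intros l hl hld. specialize (HX (a l) (Hd l hl hld)).
eapply Rle_lt_trans; [apply Rle_abs| exact HX].
Qed.

Lemma arith (m n g Gk N eps : R): 0<g -> 0<Gk -> 0<eps -> 0 <= m -> m <= N/Gk ->
  1/g - 1 < n -> g*(N*N) < Gk -> 2/eps < N -> 1 <= N -> g*N < 1/2 -> Rabs (m/n) < eps.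
Proof.
intros hg hG he hm hmN hn hgN hNe hN1 hgh.
assert (hg2 : g < /2) by nra.
assert (hig : 2 < /g).
{ assert (/ / 2 < / g) by (apply Rinv_lt_contravar; nra). rewrite Rinv_inv in H; lra. }
assert (hi2g : / (2*g) = /2 * /g) by (rewrite Rinv_mult; reflexivity).
assert (hn2 : / (2*g) < n) by (unfold Rdiv in hn; lra).
assert (hpos2 : 0 < / (2*g)) by (apply Rinv_0_lt_compat; lra).
assert (hnp : 0 < n) by lra.
assert (h1 : m / n <= m * (2*g)).
{ unfold Rdiv. rewrite <- (Rinv_inv (2*g)). apply Rmult_le_compat_l; auto.
  apply Rinv_le_contravar; lra. }
assert (hGi : Gk * / Gk = 1) by (apply Rinv_r; lra).
assert (hGip : 0 < / Gk) by (apply Rinv_0_lt_compat; lra).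
assert (h2 : m * (2*g) <= N * / Gk * (2*g)) by (apply Rmult_le_compat_r; [lra|exact hmN]).
assert (h3 : g * (N*N) * / Gk < 1) by (rewrite <- hGi; apply Rmult_lt_compat_r; auto).
assert (hei : eps * / eps = 1) by (apply Rinv_r; lra).
assert (h4 : 2 < N * eps).
{ unfold Rdiv in hNe. apply (Rmult_lt_compat_r eps) in hNe; auto.
  rewrite Rmult_assoc, Rinv_l, Rmult_1_r in hNe; lra. }
assert (h5 : N * / Gk * (2*g) * N < eps * N) by nra.
assert (h6 : N * / Gk * (2*g) < eps) by nra.
assert (0 <= m / n) by (unfold Rdiv; apply Rmult_le_pos; [lra| left; apply Rinv_0_lt_compat; lra]).
rewrite Rabs_right; lra.
Qed.

Theorem mainTheorem3 (Fbar : R -> R) (mS : R) (G : R -> R) (a : R -> R) :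
  H_S_infty Fbar mS G ->
  (forall l, 0 < l <= 1 -> 0 < a l /\ l * a l = G (a l)) ->
  exists mm : R -> nat,
    (forall l1 l2, 0 < l1 -> l1 <= l2 -> l2 <= 1 -> (mm l2 <= mm l1)%nat) /\
    lim0_infty (fun l => INR (mm l)) /\
    lim0_zero (fun l => INR (mm l) / n_of a l) /\
    (forall z, 0 <= z < 1 -> lim0_infty (fun l => INR (mm l) * G (a l * z))).
Proof.
intros H Ha.
destruct (G_props _ _ _ H) as [Hp Hmo].
assert (Hr : H_S_infty_ratio G) by (destruct H as [_ [_ [_ [_ h]]]]; exact h).
assert (Hd_ex : forall j:nat, exists d, 0<d /\ forall l, 0<l<=1 -> l<d ->
   G (a l) / G (zz (S j) * a l) < / ((INR j + 1) * (INR j + 1))).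
{ intro j. apply (r_small G a Hp Hmo Ha Hr).
  - split; [apply zz_pos|apply zz_lt1].
  - apply Rinv_0_lt_compat. generalize (pos_INR j); nra. }
pose (d := fun j => proj1_sig (constructive_indefinite_description _ (Hd_ex j))).
assert (Hd : forall j, 0 < d j /\ forall l, 0<l<=1 -> l<d j ->
   G (a l) / G (zz (S j) * a l) < / ((INR j + 1) * (INR j + 1))).
{ intro j. unfold d. destruct (constructive_indefinite_description _ _) as [x hx]. exact hx. }
assert (Hdp : forall j, 0 < d j) by (intro j; apply Hd).
set (K := Kfun d).
set (phi := fun l => INR (K l) / G (a l * zz (K l))).
exists (fun l => Z.to_nat (Int_part (phi l))).
assert (HG0 : 0 < G 0) by (apply Hp; lra).
assert (Hap : forall l, 0<l<=1 -> 0 < a l) by (intros; apply Ha; auto).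
assert (HGz : forall l k, 0<l<=1 -> 0 < G (a l * zz k)).
{ intros. apply Hp. apply Rmult_le_pos; [left; auto|apply zz_nonneg]. }
assert (HGz0 : forall l k, 0<l<=1 -> G (a l * zz k) <= G 0).
{ intros. apply Hmo; [lra|]. apply Rmult_le_pos; [left; auto|apply zz_nonneg]. }
assert (Hphi : forall l, 0<l<=1 -> 0 <= phi l).
{ intros. unfold phi, Rdiv. apply Rmult_le_pos; [apply pos_INR|left; apply Rinv_0_lt_compat; auto]. }
assert (HphiK : forall l, 0<l<=1 -> INR (K l) / G 0 <= phi l).
{ intros. unfold phi, Rdiv. apply Rmult_le_compat_l; [apply pos_INR|].
  apply Rinv_le_contravar; auto. }
assert (Hfl := fun l hl => floor_spec (phi l) (Hphi l hl)).
split; [|split; [|split]].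
- intros l1 l2 h1 h12 h2. apply floor_mono; [apply Hphi; lra|].
  assert (hK : (K l2 <= K l1)%nat) by (apply K_mono; auto).
  assert (ha := a_mono G a Hmo Ha l1 l2 h1 h12 h2).
  assert (hz := zz_mono _ _ hK).
  assert (hp1 := Hap l2 (conj (Rlt_le_trans _ _ _ h1 h12) h2)).
  assert (hzn := zz_nonneg (K l2)).
  assert (hprod : a l2 * zz (K l2) <= a l1 * zz (K l1)) by (apply Rmult_le_compat; lra).
  assert (hGle : G (a l1 * zz (K l1)) <= G (a l2 * zz (K l2))) by (apply Hmo; [nra|exact hprod]).
  unfold phi, Rdiv. apply Rmult_le_compat.
  + apply pos_INR.
  + left; apply Rinv_0_lt_compat; apply HGz; lra.
  + apply le_INR; exact hK.
  + apply Rinv_le_contravar; [apply HGz; lra|exact hGle].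
- intros M. destruct (INR_unbounded ((Rabs M + 1) * G 0)) as [k hk].
  exists (Dseq d k). split; [apply Dseq_pos; auto|].
  intros l hl hlt. simpl.
  assert (hK : (k <= K l)%nat) by (apply K_ge; auto).
  apply le_INR in hK.
  assert (h1 : Rabs M + 1 < INR k / G 0).
  { apply (Rmult_lt_reg_r (G 0)); auto. unfold Rdiv. rewrite Rmult_assoc, Rinv_l, Rmult_1_r; lra. }
  assert (h2 : INR k / G 0 <= INR (K l) / G 0).
  { unfold Rdiv. apply Rmult_le_compat_r; [left; apply Rinv_0_lt_compat; auto|exact hK]. }
  specialize (HphiK l hl). specialize (Hfl l hl). generalize (Rle_abs M). lra.
- intros eps heps. destruct (INR_unbounded (2 * G 0 + 2/eps + 1)) as [k hk].
  exists (Dseq d k). split; [apply Dseq_pos; auto|].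
  intros l hl hlt.
  assert (hK : (k <= K l)%nat) by (apply K_ge; auto).
  apply le_INR in hK.
  destruct (Kfun_spec d l hl) as [hs _]. fold K in hs.
  unfold n_of. destruct (Ha l hl) as [pa ea]. rewrite ea.
  specialize (Hfl l hl). unfold phi in Hfl.
  destruct (K l) as [|j] eqn:EK.
  { exfalso. simpl in hK. assert (0 < 2/eps) by (apply Rdiv_lt_0_compat; lra). generalize (Rlt_le _ _ HG0); lra. }
  destruct (Dseq_S d j) as [_ [hsd _]].
  assert (hr := proj2 (Hd j) l hl (Rlt_le_trans _ _ _ hs hsd)).
  rewrite S_INR in *.
  rewrite Rmult_comm in hr.
  assert (hGk := HGz l (S j) hl). assert (hGk0 := HGz0 l (S j) hl).
  assert (hgp : 0 < G (a l)) by (apply Hp; lra).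
  assert (hN1 : 1 <= INR j + 1) by (generalize (pos_INR j); lra).
  assert (hgN : G (a l) * ((INR j + 1) * (INR j + 1)) < G (a l * zz (S j))).
  { assert (hNN : 0 < (INR j + 1) * (INR j + 1)) by nra.
    apply (Rmult_lt_compat_r (G (a l * zz (S j)) * ((INR j + 1) * (INR j + 1)))) in hr; [|nra].
    unfold Rdiv in hr.
    replace (G (a l) * / G (a l * zz (S j)) * (G (a l * zz (S j)) * ((INR j + 1) * (INR j + 1))))
      with (G (a l) * ((INR j + 1) * (INR j + 1)) * (G (a l * zz (S j)) * / G (a l * zz (S j)))) in hr by ring.
    replace (/ ((INR j + 1) * (INR j + 1)) * (G (a l * zz (S j)) * ((INR j + 1) * (INR j + 1))))
      with (G (a l * zz (S j)) * (((INR j + 1) * (INR j + 1)) * / ((INR j + 1) * (INR j + 1)))) in hr by ring.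
    rewrite !Rinv_r in hr by lra. lra. }
  assert (hb := base_Int_part (1 / G (a l))).
  unfold phi; rewrite EK, S_INR.
  apply (arith _ _ (G (a l)) (G (a l * zz (S j))) (INR j + 1) eps hgp hGk heps).
  + apply pos_INR.
  + lra.
  + lra.
  + exact hgN.
  + lra.
  + exact hN1.
  + assert (0 < 2/eps) by (apply Rdiv_lt_0_compat; lra).
    assert (G 0 < (INR j + 1) * / 2) by lra.
    assert (G (a l) * (INR j + 1) * (INR j + 1) < (INR j + 1) * / 2) by nra.
    nra.
- intros z [hz0 hz1] M. destruct (zz_event z hz1) as [k0 hk0].
  destruct (INR_unbounded (Rabs M + G 0)) as [k1 hk1].
  exists (Dseq d (Nat.max k0 k1)). split; [apply Dseq_pos; auto|].
  intros l hl hlt. simpl.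
  assert (hK : (Nat.max k0 k1 <= K l)%nat) by (apply K_ge; auto).
  assert (hzK : z <= zz (K l)) by (apply hk0; lia).
  assert (hK1 : INR k1 <= INR (K l)) by (apply le_INR; lia).
  assert (hpa := Hap l hl).
  assert (hGK := HGz l (K l) hl).
  assert (hGz : 0 < G (a l * z)) by (apply Hp; nra).
  assert (hGKz : G (a l * zz (K l)) <= G (a l * z)) by (apply Hmo; nra).
  assert (hGz0 : G (a l * z) <= G 0) by (apply Hmo; nra).
  specialize (Hfl l hl). unfold phi in Hfl.
  assert (h1 : (INR (K l) / G (a l * zz (K l)) - 1) * G (a l * z) <= INR (Z.to_nat (Int_part (phi l))) * G (a l * z)).
  { apply Rmult_le_compat_r; [lra|]. unfold phi; lra. }
  assert (h2 : INR (K l) <= INR (K l) / G (a l * zz (K l)) * G (a l * z)).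
  { unfold Rdiv. rewrite Rmult_assoc.
    rewrite <- (Rmult_1_r (INR (K l))) at 1. apply Rmult_le_compat_l; [apply pos_INR|].
    rewrite <- (Rinv_l (G (a l * zz (K l)))) by lra.
    apply Rmult_le_compat_l; [left; apply Rinv_0_lt_compat; auto|exact hGKz]. }
  generalize (Rle_abs M). nra.
Qed.
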